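(* Let $\mathcal{S}_0\subset\mathbb{R}^n$ be a compact convex set of diameter $D$, and let $f_t,g_t:\mathcal{S}_0\to\mathbb{R}$, $t=1,\dots,T$, be convex with (sub)gradients bounded by $G$ and $f_t\le F$, $g_t\le F$ on $\mathcal{S}_0$, where each $f_t$ is $\ell$-strongly convex. For $V\ge0$ and $K\in\{1,\dots,T\}$ let $V_K$ be the set of sequences $z_1,\dots,z_T\in\mathcal{S}_0$ with $\sum_{t=2}^T\|z_t-z_{t-1}\|\le V$ and exactly $K$ indices $i$ with $g_i(z_i)\le0$, assumed nonempty. Define $\mathcal{L}_t(\theta,\lambda)=f_t(\theta)+\lambda[g_t(\theta)]_+-\frac{\phi_t}2\lambda^2$ and run $\theta_1\in\mathcal{S}_0$, $\lambda_t=[g_t(\theta_t)]_+/\phi_t$, $\theta_{t+1}=\Pi_{\mathcal{S}_0}(\theta_t-\eta_t\nabla_\theta\mathcal{L}_t(\theta_t,\lambda_t))$ (subgradient; $\partial[g_t]_+=0$ where $g_t\le0$), with $\phi_t=2G^2\eta_t$, $\eta_t=\frac{1-\gamma}{\ell(1-\gamma^t)}$ and $\gamma=1-\frac12\sqrt{\frac{\max\{V+T-K,\log^2T/T\}}{(D+1)T}}$. Then for any $z_1^T\in V_K$, $$\sum_{t=1}^T\big(f_t(\theta_t)-f_t(z_t)\big)\le\max\{O(\sqrt{T(T-K+V)}),O(\log T)\},$$ $$\sum_{t=1}^T[g_t(\theta_t)]_+\le\max\{O(T^{3/4}(T-K+V)^{1/4}),O(\sqrt{T\log T})\}.$$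
   Context: $[a]_+=\max\{a,0\}$; $\Pi_{\mathcal{S}_0}$ is Euclidean projection; $\ell$-strongly convex means $f(y)\ge f(x)+\nabla f(x)^\top(y-x)+\frac\ell2\|x-y\|^2$. $O(\cdot)$ hides constants depending only on $\ell,G,F,D$. *)

(* Defs.v *)
From HB Require Import structures.
From mathcomp Require Import all_boot all_order all_algebra.
From mathcomp Require Import all_classical all_reals all_analysis.
Set Implicit Arguments. Unset Strict Implicit. Unset Printing Implicit Defensive.
Import Order.TTheory GRing.Theory Num.Theory.
Local Open Scope ring_scope.
Local Open Scope classical_set_scope.

Section Defs.
Variables (R : realType) (n : nat).
Notation vec := 'rV[R]_n.

Definition dot (u v : vec) : R := \sum_(i < n) u ord0 i * v ord0 i.
Definition enorm (u : vec) : R := Num.sqrt (dot u u).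

Definition pos_part (a : R) : R := Num.max a 0.

Definition convex_set_R (S : set vec) : Prop :=
  forall x y (a : R), S x -> S y -> 0 <= a <= 1 -> S (a *: x + (1 - a) *: y).

Definition has_diameter (S : set vec) (D : R) : Prop :=
  (forall x y, S x -> S y -> enorm (x - y) <= D) /\
  (forall e, 0 < e -> exists x y, S x /\ S y /\ D - e < enorm (x - y)).

Definition is_proj (S : set vec) (x p : vec) : Prop :=
  S p /\ forall y, S y -> enorm (x - p) <= enorm (x - y).

Definition is_subgrad (S : set vec) (h : vec -> R) (x s : vec) : Prop :=
  forall y, S y -> h x + dot s (y - x) <= h y.

Definition is_sc_subgrad (S : set vec) (l : R) (h : vec -> R) (x s : vec) : Prop :=
  forall y, S y -> h x + dot s (y - x) + l / 2 * enorm (x - y) ^+ 2 <= h y.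

Definition in_VK (S : set vec) (g : nat -> vec -> R) (T : nat) (V : R) (K : nat)
    (z : nat -> vec) : Prop :=
  (forall t, (1 <= t <= T)%N -> S (z t)) /\
  \sum_(2 <= t < T.+1) enorm (z t - z t.-1) <= V /\
  #|[set i : 'I_T.+1 | (1 <= val i)%N && (g i (z i) <= 0)]| = K.

End Defs.

Definition gamma_par (R : realType) (D V : R) (T K : nat) : R :=
  1 - 2^-1 * Num.sqrt (Num.max (V + T%:R - K%:R) (ln (T%:R) ^+ 2 / T%:R)
                       / ((D + 1) * T%:R)).
Definition eta_par (R : realType) (l gam : R) (t : nat) : R :=
  (1 - gam) / (l * (1 - gam ^+ t)).
Definition phi_par (R : realType) (G eta : R) : R := 2 * G ^+ 2 * eta.

(* Main.v *)
Require Import Defs.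
From HB Require Import structures.
From mathcomp Require Import all_boot all_order all_algebra.
From mathcomp Require Import all_classical all_reals all_analysis.
From mathcomp Require Import ring lra.
Import Order.TTheory GRing.Theory Num.Theory.
Import numFieldNormedType.Exports.
Local Open Scope ring_scope.
Local Open Scope classical_set_scope.

Set Implicit Arguments. Unset Strict Implicit.

Section Vec.
Variables (R : realType) (n : nat).
Notation vec := 'rV[R]_n.
Implicit Types u v w : vec.

Lemma dotC u v : dot u v = dot v u.
Proof. by apply: eq_bigr => i _; rewrite mulrC. Qed.
Lemma dotDl u v w : dot (u + v) w = dot u w + dot v w.
Proof. by rewrite /dot -big_split; apply: eq_bigr => i _; rewrite !mxE mulrDl. Qed.
Lemma dotZl (a : R) u w : dot (a *: u) w = a * dot u w.
Proof. by rewrite /dot mulr_sumr; apply: eq_bigr => i _; rewrite !mxE mulrA. Qed.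
Lemma dotNl u w : dot (- u) w = - dot u w.
Proof. by rewrite -scaleN1r dotZl mulN1r. Qed.
Lemma dotBl u v w : dot (u - v) w = dot u w - dot v w.
Proof. by rewrite dotDl dotNl. Qed.
Lemma dotDr u v w : dot w (u + v) = dot w u + dot w v.
Proof. by rewrite dotC dotDl !(dotC w). Qed.
Lemma dotBr u v w : dot w (u - v) = dot w u - dot w v.
Proof. by rewrite dotC dotBl !(dotC w). Qed.
Lemma dotZr (a : R) u w : dot w (a *: u) = a * dot w u.
Proof. by rewrite dotC dotZl dotC. Qed.
Lemma dot_ge0 u : 0 <= dot u u.
Proof. by apply: sumr_ge0 => i _; rewrite -expr2 sqr_ge0. Qed.
Lemma enorm_ge0 u : 0 <= enorm u.
Proof. exact: sqrtr_ge0. Qed.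
Lemma enorm_sqr u : enorm u ^+ 2 = dot u u.
Proof. by rewrite /enorm sqr_sqrtr // dot_ge0. Qed.

Lemma dot_sqB u w (s : R) :
  dot (u - s *: w) (u - s *: w) = dot u u - 2 * s * dot u w + s ^+ 2 * dot w w.
Proof.
rewrite !dotBl !dotBr !dotZl !dotZr (dotC w u); ring.
Qed.

Lemma dot_sqD u w :
  dot (u + w) (u + w) = dot u u + 2 * dot u w + dot w w.
Proof. rewrite !dotDl !dotDr (dotC w u); ring. Qed.

Lemma CS u v : dot u v <= enorm u * enorm v.
Proof.
have key t : 0 <= dot u u * t ^+ 2 - 2 * t * dot u v + dot v v.
  have := dot_ge0 (v - t *: u); rewrite dot_sqB (dotC v u); lra.
rewrite /enorm -sqrtrM ?dot_ge0 //.
have [c0|c0] := lerP (dot u v) 0.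
  by apply: le_trans c0 _; exact: sqrtr_ge0.
have [A0|A0] := eqVneq (dot u u) 0.
  have := key ((dot v v + 1) / (2 * dot u v)).
  rewrite A0 mul0r add0r => H.
  have E : 2 * ((dot v v + 1) / (2 * dot u v)) * dot u v = dot v v + 1.
    by field; rewrite gt_eqF.
  exfalso; move: H; rewrite E; lra.
have Apos : 0 < dot u u by rewrite lt0r A0 dot_ge0.
have H := key (dot u v / dot u u).
have H2 : dot u v ^+ 2 <= dot u u * dot v v.
  have E : dot u u * (dot u v / dot u u) ^+ 2 - 2 * (dot u v / dot u u) * dot u v + dot v v
         = (dot u u * dot v v - dot u v ^+ 2) / dot u u.
    by field; rewrite gt_eqF.
  move: H; rewrite E pmulr_lge0 ?invr_gt0 //; lra.
have -> : dot u v = Num.sqrt (dot u v ^+ 2) by rewrite sqrtr_sqr ger0_norm // ltW.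
by rewrite ler_sqrt // mulr_ge0 // dot_ge0.
Qed.

Lemma switch_le (x z z' : vec) (D : R) : enorm (z - x) <= D -> enorm (z' - x) <= D ->
  dot (x - z') (x - z') <= dot (x - z) (x - z) + 2 * D * enorm (z' - z).
Proof.
move=> h1 h2.
have E : dot (x - z') (x - z') - dot (x - z) (x - z)
    = dot (z - x) (z' - z) + dot (z' - x) (z' - z).
  rewrite !dotBl !dotBr (dotC z' x) (dotC z x) (dotC z z'); ring.
have c1 := CS (z - x) (z' - z); have c2 := CS (z' - x) (z' - z).
have n0 := enorm_ge0 (z' - z).
have : enorm (z - x) * enorm (z' - z) + enorm (z' - x) * enorm (z' - z)
    <= 2 * D * enorm (z' - z).
  rewrite -mulrDl ler_wpM2r //; lra.
lra.
Qed.

Lemma proj_le (S : set vec) (y p z : vec) : convex_set_R S -> is_proj S y p -> S z ->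
  dot (p - z) (p - z) <= dot (y - z) (y - z).
Proof.
move=> cS [Sp pmin] Sz.
set d := dot (y - p) (z - p); set m := dot (z - p) (z - p).
have m0 : 0 <= m by exact: dot_ge0.
have key s : 0 < s <= 1 -> 2 * s * d <= s ^+ 2 * m.
  move=> /andP[s0 s1].
  have Sq := cS z p s Sz Sp (introT andP (conj (ltW s0) s1)).
  have := pmin _ Sq; rewrite /enorm ler_sqrt ?dot_ge0 //.
  have -> : y - (s *: z + (1 - s) *: p) = (y - p) - s *: (z - p).
    by apply/rowP => i; rewrite !mxE; ring.
  rewrite dot_sqB -/d -/m; lra.
have d0 : d <= 0.
  rewrite leNgt; apply/negP => dpos.
  have s0 : 0 < d / (d + m) by rewrite divr_gt0 //; lra.
  have s1 : d / (d + m) <= 1 by rewrite ler_pdivrMr; lra.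
  have := key _ (introT andP (conj s0 s1)).
  set s := d / (d + m).
  have h : s * m < d.
    rewrite /s mulrAC ltr_pdivrMr; last lra.
    have : 0 < d * d by rewrite mulr_gt0.
    lra.
  have h2 : s * (s * m) < s * d by rewrite ltr_pM2l.
  have : 0 < s * d by rewrite mulr_gt0.
  rewrite expr2 -mulrA; lra.
have -> : y - z = (y - p) + (p - z) by apply/rowP => i; rewrite !mxE; ring.
rewrite (dot_sqD (y - p) (p - z)).
have -> : dot (y - p) (p - z) = - d.
  rewrite /d -mulN1r -dotZr; congr dot.
  by apply/rowP => i; rewrite !mxE; ring.
have := dot_ge0 (y - p); lra.
Qed.

Lemma dot_sqD_le u w : dot (u + w) (u + w) <= 2 * dot u u + 2 * dot w w.
Proof.
have := dot_ge0 (u - 1 *: w); rewrite dot_sqB dot_sqD; lra.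
Qed.

Lemma pos_part_ge0 (a : R) : 0 <= pos_part a.
Proof. by rewrite /pos_part le_max lexx orbT. Qed.
Lemma pos_part_ge (a : R) : a <= pos_part a.
Proof. by rewrite /pos_part le_max lexx. Qed.
Lemma pos_part_gt0 (a : R) : 0 < a -> pos_part a = a.
Proof. by move=> a0; rewrite /pos_part max_l // ltW. Qed.
Lemma pos_part_le0 (a : R) : a <= 0 -> pos_part a = 0.
Proof. by move=> a0; rewrite /pos_part max_r. Qed.

Lemma step_ineq (S : set vec) (l G eta : R) (f g : vec -> R) (df dg : vec -> vec)
  (th th' z : vec) :
  0 < l -> 0 < G -> 0 < eta -> convex_set_R S -> S th -> S z ->
  is_sc_subgrad S l f th (df th) -> is_subgrad S g th (dg th) ->
  enorm (df th) <= G -> enorm (dg th) <= G ->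
  (let phi := phi_par G eta in
   let lam := pos_part (g th) / phi in
   let sg := if 0 < g th then dg th else 0 in
   is_proj S (th - eta *: (df th + lam *: sg)) th') ->
  f th - f z + pos_part (g th) ^+ 2 / (8 * G ^+ 2 * eta)
  <= pos_part (g z) ^+ 2 / (2 * G ^+ 2 * eta)
     + (dot (th - z) (th - z) - dot (th' - z) (th' - z)) / (2 * eta)
     - l / 2 * dot (th - z) (th - z) + eta * G ^+ 2.
Proof.
move=> l0 G0 e0 cS Sth Sz sc sgr dfG dgG /=.
rewrite /phi_par.
set phi := 2 * G ^+ 2 * eta.
set c := pos_part (g th); set b := pos_part (g z).
set lam := c / phi.
set sg := if 0 < g th then dg th else 0.
set u := df th + lam *: sg.
move=> pr.
have phi0 : 0 < phi by rewrite /phi !mulr_gt0 // exprn_gt0.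
have c0 : 0 <= c := pos_part_ge0 _.
have b0 : 0 <= b := pos_part_ge0 _.
have lam0 : 0 <= lam by rewrite /lam divr_ge0 // ltW.
have clam : c = phi * lam by rewrite /lam mulrC divfK // gt_eqF.
set A := dot (th - z) (th - z); set A' := dot (th' - z) (th' - z).
have hp := @proj_le S _ _ z cS pr Sz.
have E : th - eta *: u - z = (th - z) - eta *: u by apply/rowP => i; rewrite !mxE; ring.
rewrite E dot_sqB -/A in hp.
have hsc : f th - f z + l / 2 * A <= dot (th - z) (df th).
  have := sc z Sz; rewrite enorm_sqr.
  have -> : dot (df th) (z - th) = - dot (th - z) (df th).
    by rewrite -opprB dotC dotNl.
  rewrite -/A. lra.
have hcon : lam * c - lam * b <= lam * dot (th - z) sg.
  rewrite -mulrBr; apply: ler_wpM2l => //.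
  rewrite /sg; case: ifP => gpos.
    have := sgr z Sz; rewrite /c pos_part_gt0 //.
    have -> : dot (dg th) (z - th) = - dot (th - z) (dg th).
      by rewrite -opprB dotC dotNl.
    have := pos_part_ge (g z); rewrite -/b; lra.
  rewrite /c pos_part_le0; last by rewrite leNgt gpos.
  have -> : dot (th - z) 0 = 0 by rewrite /dot big1 // => i _; rewrite !mxE mulr0.
  lra.
have sqle (x y : R) : 0 <= x -> x <= y -> x ^+ 2 <= y ^+ 2.
  by move=> x0 xy; rewrite !expr2 ler_pM.
have hdf : dot (df th) (df th) <= G ^+ 2.
  by rewrite -enorm_sqr sqle // enorm_ge0.
have hsg : dot sg sg <= G ^+ 2.
  rewrite /sg; case: ifP => _.
    by rewrite -enorm_sqr sqle // enorm_ge0.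
  rewrite /dot big1 ?exprn_ge0 ?ltW // => i _; rewrite mxE mulr0 //.
have hN : dot u u <= 2 * G ^+ 2 + 2 * (lam ^+ 2 * G ^+ 2).
  apply: le_trans (dot_sqD_le _ _) _.
  rewrite dotZl dotZr (mulrA lam lam) -expr2.
  have : lam ^+ 2 * dot sg sg <= lam ^+ 2 * G ^+ 2 by rewrite ler_wpM2l // sqr_ge0.
  lra.
have hX : dot (th - z) u = dot (th - z) (df th) + lam * dot (th - z) sg.
  by rewrite /u dotDr dotZr.
set X := dot (th - z) u; set Nu := dot u u.
have H1 : X - eta * Nu / 2 <= (A - A') / (2 * eta).
  rewrite ler_pdivlMr ?mulr_gt0 //.
  have -> : (X - eta * Nu / 2) * (2 * eta) = 2 * eta * X - eta ^+ 2 * Nu by field.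
  have hp' : A' <= A - 2 * eta * X + eta ^+ 2 * Nu := hp.
  lra.
have H2 : eta * Nu / 2 <= eta * G ^+ 2 + phi * lam ^+ 2 / 2.
  have : eta * Nu <= eta * (2 * G ^+ 2 + 2 * (lam ^+ 2 * G ^+ 2)) by rewrite ler_wpM2l // ltW.
  have -> : eta * (2 * G ^+ 2 + 2 * (lam ^+ 2 * G ^+ 2)) = 2 * (eta * G ^+ 2) + phi * lam ^+ 2.
    by rewrite /phi; ring.
  lra.
have H3 : c ^+ 2 / (8 * G ^+ 2 * eta) = phi * lam ^+ 2 / 4.
  rewrite clam /phi; field; rewrite ?gt_eqF //.
have H4 : lam * b <= phi * lam ^+ 2 / 4 + b ^+ 2 / phi.
  have h := sqr_ge0 (phi * lam / 2 - b).
  rewrite -[lam * b](@mulfK _ phi) ?gt_eqF // -[phi * lam ^+ 2 / 4](@mulfK _ phi) ?gt_eqF //.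
  rewrite -mulrDl ler_pM2r ?invr_gt0 //.
  have -> : phi * lam ^+ 2 / 4 * phi + b ^+ 2 = (phi * lam / 2 - b) ^+ 2 + lam * b * phi by field.
  lra.
have H5 : lam * c = phi * lam ^+ 2 by rewrite clam; ring.
have hX' : X = dot (th - z) (df th) + lam * dot (th - z) sg := hX.
rewrite H3; lra.
Qed.

Lemma sc_gap (S : set vec) (l G D : R) (h : vec -> R) (x s y : vec) :
  is_sc_subgrad S l h x s -> S y -> 0 <= l -> enorm s <= G ->
  enorm (x - y) <= D -> h x - h y <= G * D.
Proof.
move=> sc Sy l0 sG xyD.
have := sc y Sy.
have -> : dot s (y - x) = - dot (x - y) s by rewrite -opprB dotC dotNl.
have := CS (x - y) s.
have : enorm (x - y) * enorm s <= D * G by rewrite ler_pM ?enorm_ge0.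
have : 0 <= l / 2 * enorm (x - y) ^+ 2 by rewrite mulr_ge0 ?divr_ge0 ?sqr_ge0.
rewrite [G * D]mulrC; lra.
Qed.

Lemma sq_le_inv (x y : R) : 0 <= y -> x ^+ 2 <= y ^+ 2 -> x <= y.
Proof.
move=> y0 h; rewrite leNgt; apply/negP => yx.
have : y ^+ 2 < x ^+ 2 by rewrite !expr2; nra.
lra.
Qed.

Lemma pos_part_le (a b : R) : a <= b -> pos_part a <= pos_part b.
Proof.
move=> ab; rewrite /pos_part ge_max !le_max lexx !orbT andbT.
by rewrite ab.
Qed.
End Vec.
Section Scal.
Variable R : realType.

Lemma bernoulli (a : R) (t : nat) : 0 <= a -> 1 + t%:R * a <= (1 + a) ^+ t.
Proof.
move=> a0; elim: t => [|t IH]; first by rewrite mul0r addr0 expr0.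
rewrite exprS -natr1.
have h : (1 + a) * (1 + t%:R * a) <= (1 + a) * (1 + a) ^+ t by rewrite ler_wpM2l //; lra.
have : 0 <= t%:R * a * a by rewrite mulr_ge0 // mulr_ge0.
nra.
Qed.

Lemma geo_le (a : R) (t : nat) : 0 <= a <= 1 -> (1 - a) ^+ t * (1 + t%:R * a) <= 1.
Proof.
move=> /andP[a0 a1].
apply: le_trans (_ : (1 - a) ^+ t * (1 + a) ^+ t <= 1).
  by rewrite ler_wpM2l ?bernoulli // exprn_ge0 //; lra.
rewrite -exprMn; apply: exprn_ile1; nra.
Qed.

Lemma eta_facts (l a : R) (t : nat) : 0 < l -> 0 < a < 1 -> (1 <= t)%N ->
  let eta := eta_par l (1 - a) t in
  [/\ 0 < eta, eta <= (t%:R^-1 + a) / l &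
      (2 * eta)^-1 = l * (1 - (1 - a) ^+ t) / (2 * a)].
Proof.
move=> l0 /andP[a0 a1] t1 eta.
have ga : 1 - (1 - a) = a by ring.
have g0 : 0 <= 1 - a by lra.
have gt1 : (1 - a) ^+ t < 1 by rewrite exprn_ilt1 // ?gtn_eqF //; lra.
have pos : 0 < 1 - (1 - a) ^+ t by lra.
have t0 : 0 < t%:R :> R by rewrite ltr0n.
have gl := @geo_le a t (introT andP (conj (ltW a0) (ltW a1))).
have low : t%:R * a / (1 + t%:R * a) <= 1 - (1 - a) ^+ t.
  rewrite ler_pdivrMr; last by have := mulr_gt0 t0 a0; lra.
  have := mulr_gt0 t0 a0; nra.
have E : eta = a / (l * (1 - (1 - a) ^+ t)) by rewrite /eta /eta_par ga.
split.
- by rewrite E divr_gt0 // mulr_gt0.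
- set Y := 1 - (1 - a) ^+ t in low pos E *.
  have ta0 : 0 < t%:R * a by rewrite mulr_gt0.
  have h : a / Y <= (1 + t%:R * a) / t%:R.
    rewrite ler_pdivrMr //.
    have E' : (1 + t%:R * a) / t%:R * (t%:R * a / (1 + t%:R * a)) = a.
      by field; apply/andP; split; rewrite gt_eqF //; lra.
    rewrite -[X in X <= _]E' ler_wpM2l // divr_ge0 //; lra.
  have -> : eta = (a / Y) / l by rewrite E; field; apply/andP; split; rewrite gt_eqF.
  have -> : (t%:R^-1 + a) = (1 + t%:R * a) / t%:R by field; rewrite gt_eqF.
  by rewrite ler_pM2r ?invr_gt0.
- by rewrite E; field; rewrite ?gt_eqF //; apply/and3P; split; rewrite gt_eqF.

Qed.

Lemma harmonic_le (T : nat) : (1 <= T)%N ->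
  \sum_(1 <= t < T.+1) (t%:R : R)^-1 <= 1 + ln (T%:R : R).
Proof.
elim: T => [//|T IH] _.
rewrite big_nat_recr //=.
case: T IH => [|T] IH.
  by rewrite big_geq // add0r invr1 ln1 addr0.
have {}IH := IH isT.
set x : R := T.+1%:R in IH *.
have x0 : 0 < x by rewrite ltr0n.
have E : (T.+2%:R : R) = x + 1 by rewrite /x -natr1.
rewrite E.
have y0 : 0 < 1 + - (x + 1)^-1.
  rewrite subr_gt0 invf_lt1; lra.
have Ex : x = (x + 1) * (1 + - (x + 1)^-1) by field; rewrite gt_eqF //; lra.
have hl : ln x <= ln (x + 1) - (x + 1)^-1.
  rewrite {1}Ex lnM ?posrE //; last lra.
  have := @le_ln1Dx R (- (x + 1)^-1).
  have : - (x + 1)^-1 > -1 by rewrite ltrN2 invf_lt1; lra.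
  move=> h1 h2; have := h2 h1; lra.
lra.
Qed.

Lemma ln4_ge1 (T : nat) : (4 <= T)%N -> 1 <= ln (T%:R : R).
Proof.
move=> T4.
have h2 : expR (2^-1) <= (2 : R).
  have := @expR_ge1Dx R (- 2^-1).
  rewrite expRN => h.
  have e0 : 0 < expR (2^-1 : R) := expR_gt0 _.
  rewrite -(@ler_pM2r _ (expR (2^-1))^-1) ?invr_gt0 // divff ?gt_eqF //.
  lra.
rewrite -[X in X <= _](expRK 1).
rewrite ler_ln ?posrE ?expR_gt0 ?ltr0n //; last by case: T T4.
have -> : expR (1 : R) = expR (2^-1) * expR (2^-1).
  by rewrite -expRD; congr expR; field.
apply: le_trans (_ : 2 * 2 <= _).
  by rewrite ler_pM ?expR_ge0.
rewrite -natrM ler_nat; case: T T4 => //.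
Qed.

Lemma tele (T : nat) (w A A' d : nat -> R) (l Dm : R) :
  (1 <= T)%N ->
  w 1%N = l / 2 ->
  (forall t, (1 <= t < T)%N -> w t.+1 - w t <= l / 2) ->
  (forall t, (1 <= t <= T)%N -> 0 <= w t) ->
  (forall t, (1 <= t <= T)%N -> 0 <= A t) ->
  (forall t, (1 <= t < T)%N -> A t.+1 - 2 * Dm * d t <= A' t) ->
  0 <= A' T ->
  \sum_(1 <= t < T.+1) (w t * (A t - A' t) - l / 2 * A t)
    <= \sum_(1 <= t < T) 2 * Dm * (w t * d t).
Proof.
move=> T1 w1 wD w0 A0 sw AT.
suff aux : forall m, (1 <= m <= T)%N ->
  \sum_(1 <= t < m.+1) (w t * (A t - A' t) - l / 2 * A t)
    <= - (w m * A' m) + \sum_(1 <= t < m) 2 * Dm * (w t * d t).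
  have := aux T (introT andP (conj T1 (leqnn T))).
  have : 0 <= w T * A' T by rewrite mulr_ge0 // w0 // T1 leqnn.
  lra.
elim=> [//|m IH] /andP[m1 mT].
case: m IH m1 mT => [|m] IH _ mT.
  rewrite big_nat1 big_geq // w1; lra.
have {}IH := IH (introT andP (conj isT (ltnW mT))).
rewrite big_nat_recr //= [X in _ <= _ + X]big_nat_recr //=.
have h1 := wD m.+1 (introT andP (conj isT mT)).
have h2 : w m.+1 * (A m.+2 - 2 * Dm * d m.+1) <= w m.+1 * A' m.+1.
  apply: ler_wpM2l; [apply: w0; exact: ltnW | exact: sw].
have h3 : (w m.+2 - w m.+1 - l / 2) * A m.+2 <= 0.
  by rewrite mulr_le0_ge0 ?(A0 m.+2) //; lra.
lra.
Qed.

Lemma card_sumR (T K : nat) (P : nat -> bool) (h : nat -> R) (B : R) :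
  #|[set i : 'I_T.+1 | (1 <= val i)%N && P i]| = K ->
  (forall t, (1 <= t <= T)%N -> P t -> h t = 0) ->
  (forall t, (1 <= t <= T)%N -> h t <= B) ->
  \sum_(1 <= t < T.+1) h t <= B * (T%:R - K%:R).
Proof.
move=> HK h0 hB.
have E1 : (K%:R : R) = \sum_(1 <= t < T.+1) (P t)%:R.
  rewrite -HK -sum1_card natr_sum.
  rewrite big_mkcond /=.
  rewrite (eq_bigr (fun i : 'I_T.+1 => if (0 < i)%N && P i then 1 else 0 : R)); last first.
    move=> i _; congr (if _ then _ else _).
    by apply/idP/idP => [/set_mem | hh]; [|apply: mem_set].
  rewrite -(big_mkord xpredT (fun i => if (0 < i)%N && P i then 1 else 0)).
  rewrite big_ltn // /= add0r; apply: eq_big_nat => t /andP[t1 _].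
  by rewrite t1 /=; case: (P t).
have E2 : (T%:R : R) = \sum_(1 <= t < T.+1) 1.
  by rewrite sumr_const_nat subn1.
rewrite E1 E2 -sumrB mulr_sumr; apply: ler_sum_nat => t /andP[t1 tT].
have tT' : (1 <= t <= T)%N by rewrite t1 -ltnS.
case: (boolP (P t)) => Pt.
  by rewrite h0 // subrr mulr0.
by rewrite subr0 mulr1 hB.
Qed.


Lemma rhs2 (TR P : R) : 1 <= TR -> 0 <= P -> 0 <= ln TR ->
  Num.sqrt TR * Num.sqrt (Num.max (Num.sqrt (TR * P)) (ln TR))
  <= Num.max (powR TR (3 / 4) * powR P (1 / 4)) (Num.sqrt (TR * ln TR)).
Proof.
move=> T1 P0 l0.
have T0 : 0 <= TR by lra.
have [h|h] := leP (Num.sqrt (TR * P)) (ln TR).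
  by rewrite -sqrtrM // le_max lexx orbT.
rewrite le_max; apply/orP; left.
rewrite -!powR12_sqrt ?mulr_ge0 ?powR_ge0 // powRM // powRM ?powR_ge0 //.
rewrite -!powRrM mulrA -powRD; last by apply/implyP => _; rewrite gt_eqF //; lra.
have -> : (2^-1 + 2^-1 * 2^-1 : R) = 3 / 4 by field.
have -> : (2^-1 * 2^-1 : R) = 1 / 4 by field.
by [].
Qed.

Lemma params (TR Q P M D sD a : R) : 0 < TR -> 0 <= P -> 0 <= D -> 0 <= Q -> Q < TR ->
  sD ^+ 2 = D + 1 -> 0 <= sD -> P <= M -> 0 < M -> TR * P <= Q ^+ 2 ->
  TR * M <= Q ^+ 2 -> 0 <= a -> a ^+ 2 * (4 * (D + 1) * TR) = M ->
  [/\ 0 < a, a < 1, a * TR <= Q & P <= 2 * sD * Q * a].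
Proof.
move=> TR0 P0 D0 Q0 QT sD2 sD0 MP M0 QP MQ a0 ka.
have D10 : 0 < D + 1 by lra.
have apos : 0 < a.
  rewrite lt0r a0 andbT; apply/eqP => az; move: ka; rewrite az expr0n /= mul0r.
  by move=> h; move: M0; rewrite -h ltxx.
have QTsq : Q ^+ 2 < TR ^+ 2 by rewrite !expr2; nra.
split => //.
- rewrite ltNge; apply/negP => a1.
  have h : 1 <= a ^+ 2 by rewrite expr2; nra.
  have k0 : 0 <= 4 * (D + 1) * TR by apply: mulr_ge0; [apply: mulr_ge0|]; lra.
  have hk : 4 * (D + 1) * TR <= M by rewrite -ka ler_peMl.
  have : TR * (4 * (D + 1) * TR) <= TR * M by rewrite ler_wpM2l // ltW.
  rewrite !expr2 in QTsq; nra.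
- apply: sq_le_inv; first lra.
  have : (a * TR) ^+ 2 * (4 * (D + 1)) = TR * M.
    by rewrite -ka; ring.
  have : 0 <= (a * TR) ^+ 2 := sqr_ge0 _.
  nra.
- apply: sq_le_inv; first by rewrite !mulr_ge0 //; lra.
  have E : (2 * sD * Q * a) ^+ 2 * TR = Q ^+ 2 * M.
    by rewrite -ka exprMn [in LHS]exprMn [in LHS]exprMn sD2; ring.
  have h1 : P ^+ 2 <= P * M by rewrite expr2 ler_wpM2l.
  have h2 : TR * (P * M) <= Q ^+ 2 * M by rewrite mulrA ler_wpM2r // ltW.
  rewrite -(@ler_pM2r _ TR) // E.
  apply: le_trans h2; rewrite mulrC ler_wpM2l //; lra.
Qed.

End Scal.

Section Scal2.
Variable R : realType.
Lemma amgm (G s e c : R) : 0 < G -> 0 < s -> 0 < e ->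
  c <= (4 * G ^+ 2 / s) * (c ^+ 2 / (8 * G ^+ 2 * e)) + s / 2 * e.
Proof.
move=> G0 s0 e0.
have E : (4 * G ^+ 2 / s) * (c ^+ 2 / (8 * G ^+ 2 * e)) + s / 2 * e - c
         = (c - s * e) ^+ 2 / (2 * s * e).
  by field; rewrite !gt_eqF.
have : 0 <= (c - s * e) ^+ 2 / (2 * s * e).
  by rewrite divr_ge0 ?sqr_ge0 // !mulr_ge0 // ltW.
lra.
Qed.

Lemma hb_le (b Fp G e w l a : R) : 0 <= b -> b <= Fp -> 0 < G -> 0 < e ->
  w = (2 * e)^-1 -> w <= l / (2 * a) ->
  b ^+ 2 / (2 * G ^+ 2 * e) <= Fp ^+ 2 * (l / (2 * a)) / G ^+ 2.
Proof.
move=> b0 bF G0 e0 wE wl.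
have G2 : 0 < G ^+ 2 by rewrite exprn_gt0.
have -> : b ^+ 2 / (2 * G ^+ 2 * e) = b ^+ 2 * w / G ^+ 2.
  by rewrite wE; field; rewrite !gt_eqF.
rewrite ler_pM2r ?invr_gt0 //.
apply: ler_pM.
- exact: sqr_ge0.
- by rewrite wE invr_ge0 mulr_ge0 // ltW.
- by rewrite !expr2 ler_pM.
- exact: wl.
Qed.

Lemma Bx_le (Fp l a G x sD Q : R) : 0 < a -> 0 < G -> 0 < l ->
  0 <= x -> x <= 2 * sD * Q * a ->
  Fp ^+ 2 * (l / (2 * a)) / G ^+ 2 * x <= l * Fp ^+ 2 * sD / G ^+ 2 * Q.
Proof.
move=> a0 G0 l0 x0 xle.
have B0 : 0 <= Fp ^+ 2 * (l / (2 * a)) / G ^+ 2.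
  apply: divr_ge0; last by rewrite ltW // exprn_gt0.
  apply: mulr_ge0; first exact: sqr_ge0.
  apply: divr_ge0; first exact: ltW.
  by apply: mulr_ge0 => //; exact: ltW.
apply: le_trans (_ : Fp ^+ 2 * (l / (2 * a)) / G ^+ 2 * (2 * sD * Q * a) <= _).
  by rewrite ler_wpM2l.
by rewrite le_eqVlt; apply/orP; left; apply/eqP; field; rewrite !gt_eqF.
Qed.

Lemma w_facts (l a : R) (t : nat) : 0 < l -> 0 < a < 1 ->
  l * (1 - (1 - a) ^+ 1) / (2 * a) = l / 2 /\
  l * (1 - (1 - a) ^+ t.+1) / (2 * a) - l * (1 - (1 - a) ^+ t) / (2 * a) <= l / 2.
Proof.
move=> l0 /andP[a0 a1]; split.
  by rewrite expr1; field; rewrite gt_eqF.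
have -> : l * (1 - (1 - a) ^+ t.+1) / (2 * a) - l * (1 - (1 - a) ^+ t) / (2 * a)
   = l / 2 * (1 - a) ^+ t.
  by rewrite exprS; field; rewrite gt_eqF.
apply: (@le_trans _ _ (l / 2 * 1)); last by rewrite mulr1.
apply: ler_wpM2l; first by apply: divr_ge0 => //; exact: ltW.
apply: exprn_ile1; lra.
Qed.

Lemma final_comb (SR SX SH STl SE SC G D l k1 k2 TR Q sT sQ : R) :
  0 < G -> 0 <= D -> 0 < l -> 0 < sT -> 0 < sQ -> sT ^+ 2 = TR -> sQ ^+ 2 = Q ->
  Q < TR -> 0 <= k1 -> 0 <= k2 ->
  SR + SX <= SH + STl + G ^+ 2 * SE -> 0 <= SX ->
  SH <= k1 * Q -> STl <= k2 * Q -> SE <= 3 * Q / l -> - (G * D * TR) <= SR ->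
  SC <= (4 * G ^+ 2 / (sT / sQ)) * SX + (sT / sQ) / 2 * SE ->
  SR <= (k1 + k2 + 3 * G ^+ 2 / l) * Q /\
  SC <= (4 * G ^+ 2 * ((k1 + k2 + 3 * G ^+ 2 / l) + G * D) + 3 / (2 * l)) * (sT * sQ).
Proof.
move=> G0 D0 l0 sT0 sQ0 sT2 sQ2 QT k10 k20 Hs SX0 H1 H2 H3 H4 H5.
set k := k1 + k2 + 3 * G ^+ 2 / l.
have G2 : 0 < G ^+ 2 by rewrite exprn_gt0.
have E3 : G ^+ 2 * (3 * Q / l) = 3 * G ^+ 2 / l * Q by field; rewrite gt_eqF.
have HE : G ^+ 2 * SE <= G ^+ 2 * (3 * Q / l) by rewrite ler_wpM2l // ltW.
have reg : SR <= k * Q by rewrite /k mulrDl mulrDl; lra.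
split => //.
have Q0 : 0 <= Q by rewrite -sQ2 sqr_ge0.
have k3 : 0 <= 3 * G ^+ 2 / l.
  by apply: divr_ge0; [apply: mulr_ge0 => //; exact: ltW | exact: ltW].
have k0 : 0 <= k by rewrite /k; lra.
have GD0 : 0 <= G * D by apply: mulr_ge0 => //; exact: ltW.
have SXb : SX <= (k + G * D) * TR.
  have : k * Q <= k * TR by apply: ler_wpM2l => //; exact: ltW.
  rewrite mulrDl; lra.
have s0 : 0 < sT / sQ by apply: divr_gt0.
have c1 : 0 <= 4 * G ^+ 2 / (sT / sQ).
  by apply: divr_ge0; [apply: mulr_ge0 => //; exact: ltW | exact: ltW].
have c2 : 0 <= sT / sQ / 2 by apply: divr_ge0 => //; exact: ltW.
have h1 : 4 * G ^+ 2 / (sT / sQ) * SX <= 4 * G ^+ 2 / (sT / sQ) * ((k + G * D) * TR).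
  by rewrite ler_wpM2l.
have h2 : sT / sQ / 2 * SE <= sT / sQ / 2 * (3 * Q / l) by rewrite ler_wpM2l.
have e1 : 4 * G ^+ 2 / (sT / sQ) * ((k + G * D) * TR) = 4 * G ^+ 2 * (k + G * D) * (sT * sQ).
  by rewrite -sT2; field; rewrite !gt_eqF.
have e2 : sT / sQ / 2 * (3 * Q / l) = 3 / (2 * l) * (sT * sQ).
  by rewrite -sQ2; field; rewrite !gt_eqF.
rewrite mulrDl; lra.
Qed.
End Scal2.

Section Scal3.
Variable R : realType.

Lemma tel_term (D w d l a : R) : 0 <= D -> 0 <= d -> 0 < a -> w <= l / (2 * a) ->
  2 * D * (w * d) <= D * l / a * d.
Proof.
move=> D0 d0 a0 wl.
have -> : D * l / a * d = 2 * D * (l / (2 * a) * d) by field; rewrite gt_eqF.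
apply: ler_wpM2l; first by apply: mulr_ge0.
exact: ler_wpM2r.
Qed.

Lemma Vx_le (D l a V sD Q : R) : 0 <= D -> 0 < l -> 0 < a -> V <= 2 * sD * Q * a ->
  D * l / a * V <= 2 * D * l * sD * Q.
Proof.
move=> D0 l0 a0 hV.
have c0 : 0 <= D * l / a by apply: divr_ge0; [apply: mulr_ge0 => //; exact: ltW | exact: ltW].
apply: le_trans (ler_wpM2l c0 hV) _.
by rewrite le_eqVlt; apply/orP; left; apply/eqP; field; rewrite gt_eqF.
Qed.

Lemma eta_sum (e : nat -> R) (l a Q : R) (T : nat) : 0 < l -> (1 <= T)%N ->
  (forall t, (1 <= t <= T)%N -> e t <= (t%:R^-1 + a) / l) ->
  1 <= Q -> ln (T%:R : R) <= Q -> a * T%:R <= Q ->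
  \sum_(1 <= t < T.+1) e t <= 3 * Q / l.
Proof.
move=> l0 T1 he Q1 lnQ aQ.
apply: le_trans (_ : \sum_(1 <= t < T.+1) (t%:R^-1 + a) / l <= _).
  by apply: ler_sum_nat => t; rewrite ltnS; exact: he.
rewrite -mulr_suml big_split /= sumr_const_nat subn1 /= -mulr_natr.
rewrite ler_pM2r ?invr_gt0 //.
have := harmonic_le R T1; lra.
Qed.

Lemma scale_le (x k C Q : R) : x <= k * Q -> 0 <= Q -> k <= C -> x <= C * Q.
Proof. by move=> h Q0 kC; apply: le_trans h _; apply: ler_wpM2r. Qed.

Lemma scale_le2 (x k C u W : R) : x <= k * u -> 0 <= u -> k <= C -> 0 <= C -> u <= W ->
  x <= C * W.
Proof.
move=> h u0 kC C0 uW; apply: le_trans h _.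
apply: le_trans (_ : C * u <= _); first exact: ler_wpM2r.
exact: ler_wpM2l.
Qed.
End Scal3.

Unset Implicit Arguments. Set Strict Implicit.

Theorem theorem5p4 (R : realType) (l G F D : R) :
  0 < l -> 0 < G -> 0 <= D ->
  exists (C : R) (T0 : nat), 0 < C /\
  forall (n : nat) (S0 : set 'rV[R]_n) (T : nat)
         (f g : nat -> 'rV[R]_n -> R) (df dg : nat -> 'rV[R]_n -> 'rV[R]_n)
         (V : R) (K : nat) (theta z : nat -> 'rV[R]_n),
    compact S0 -> convex_set_R S0 -> has_diameter S0 D ->
    (T0 <= T)%N ->
    (forall t x, (1 <= t <= T)%N -> S0 x ->
       [/\ f t x <= F, g t x <= F,
           is_sc_subgrad S0 l (f t) x (df t x) & is_subgrad S0 (g t) x (dg t x)] /\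
       enorm (df t x) <= G /\ enorm (dg t x) <= G) ->
    0 <= V -> (1 <= K <= T)%N ->
    S0 (theta 1%N) ->
    (forall t, (1 <= t <= T)%N ->
       let gam := gamma_par D V T K in
       let eta := eta_par l gam t in
       let phi := phi_par G eta in
       let lam := pos_part (g t (theta t)) / phi in
       let sg := if 0 < g t (theta t) then dg t (theta t) else 0 in
       is_proj S0 (theta t - eta *: (df t (theta t) + lam *: sg)) (theta t.+1)) ->
    in_VK S0 g T V K z ->
    \sum_(1 <= t < T.+1) (f t (theta t) - f t (z t))
      <= C * Num.max (Num.sqrt (T%:R * (T%:R - K%:R + V))) (ln (T%:R)) /\
    \sum_(1 <= t < T.+1) pos_part (g t (theta t))
      <= C * Num.max (powR T%:R (3 / 4) * powR (T%:R - K%:R + V) (1 / 4))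
                     (Num.sqrt (T%:R * ln (T%:R))).
Proof.
move=> l0 G0 D0.
set Fp := pos_part F.
set sD := Num.sqrt (D + 1).
set cB := l * Fp ^+ 2 * sD / G ^+ 2 + 2 * D * l * sD + 3 * G ^+ 2 / l.
have Fp0 : 0 <= Fp := pos_part_ge0 F.
have sD1 : 1 <= sD by rewrite -sqrtr1 ler_sqrt; lra.
have sD2 : sD ^+ 2 = D + 1 by rewrite sqr_sqrtr //; lra.
have G20 : 0 < G ^+ 2 by rewrite exprn_gt0.
have cB0 : 0 <= cB.
  rewrite /cB; have h1 : 0 <= l * Fp ^+ 2 * sD / G ^+ 2.
    apply: divr_ge0; last exact: ltW. apply: mulr_ge0; last lra.
    by apply: mulr_ge0; [exact: ltW | exact: sqr_ge0].
  have h2 : 0 <= 2 * D * l * sD.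
    by apply: mulr_ge0; [apply: mulr_ge0; [apply: mulr_ge0 => //; lra | exact: ltW] | lra].
  have h3 : 0 <= 3 * G ^+ 2 / l by rewrite divr_ge0 ?mulr_ge0 ?ltW.
  lra.
have GD0 : 0 <= G * D by apply: mulr_ge0 => //; exact: ltW.
set C := cB + G * D + 4 * G ^+ 2 * (cB + G * D) + 3 / (2 * l) + Fp + 1.
have c1 : 0 <= 4 * G ^+ 2 * (cB + G * D).
  by apply: mulr_ge0; [apply: mulr_ge0; [lra | exact: ltW] | lra].
have c2 : 0 <= 3 / (2 * l) by rewrite divr_ge0 // mulr_ge0 ?ltW.
have C0 : 0 < C by rewrite /C; lra.
have CcB : cB <= C by rewrite /C; lra.
have CGD : G * D <= C by rewrite /C; lra.
have CFp : Fp <= C by rewrite /C; lra.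
have Cv : 4 * G ^+ 2 * (cB + G * D) + 3 / (2 * l) <= C by rewrite /C; lra.
exists C, 4%N; split; first exact: C0.
move=> n S0 T f g df dg V K theta z cpt cvx diam T4 hyp V0 /andP[K1 KT] th1
  hproj [zS [zV zK]].
set TR : R := T%:R.
have T1 : (1 <= T)%N by apply: leq_trans T4.
have TR4 : 4 <= TR by rewrite /TR ler_nat.
have lnT1 : 1 <= ln TR := @ln4_ge1 R T T4.
have KR : K%:R <= TR by rewrite ler_nat.
set P := TR - K%:R + V.
have P0 : 0 <= P by rewrite /P; lra.
set Q := Num.max (Num.sqrt (TR * P)) (ln TR).
have QlnT : ln TR <= Q by rewrite le_max lexx orbT.
have QsTP : Num.sqrt (TR * P) <= Q by rewrite le_max lexx.
have Q1 : 1 <= Q by lra.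
have sqle (x y : R) : 0 <= x -> x <= y -> x ^+ 2 <= y ^+ 2.
  by move=> x0 xy; rewrite !expr2 ler_pM.
have Q2TP : TR * P <= Q ^+ 2.
  have TP0 : 0 <= TR * P by apply: mulr_ge0 => //; lra.
  rewrite -[X in X <= _](sqr_sqrtr TP0).
  by apply: sqle => //; exact: sqrtr_ge0.
have Q2ln : ln TR ^+ 2 <= Q ^+ 2 by apply: sqle => //; lra.
have htS t : (1 <= t <= T)%N -> (1 <= t <= T.+1)%N.
  by case/andP => -> /leqW.
have thS : forall t, (1 <= t <= T.+1)%N -> S0 (theta t).
  elim=> [//|t IH] /andP[t1 tT].
  case: t IH t1 tT => [|t] IH _ tT; first exact: th1.
  by have [] := hproj t.+1 (introT andP (conj isT tT)).
have thS' t : (1 <= t <= T)%N -> S0 (theta t) by move=> ht; apply/thS/htS.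
have rle t : (1 <= t <= T)%N -> f t (theta t) - f t (z t) <= G * D.
  move=> ht; have [[_ _ sc _] [dfG _]] := hyp t (theta t) ht (thS' t ht).
  exact: sc_gap sc (zS t ht) (ltW l0) dfG (diam.1 _ _ (thS' t ht) (zS t ht)).
have rge t : (1 <= t <= T)%N -> f t (z t) - f t (theta t) <= G * D.
  move=> ht; have [[_ _ sc _] [dfG _]] := hyp t (z t) ht (zS t ht).
  exact: sc_gap sc (thS' t ht) (ltW l0) dfG (diam.1 _ _ (zS t ht) (thS' t ht)).
have cle t : (1 <= t <= T)%N -> pos_part (g t (theta t)) <= Fp.
  move=> ht; have [[_ gF _ _] _] := hyp t (theta t) ht (thS' t ht).
  exact: pos_part_le.
have sumc (x : R) : \sum_(1 <= t < T.+1) x = x * TR.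
  by rewrite sumr_const_nat subn1 /= mulr_natr.
set sT := Num.sqrt TR; set sQ := Num.sqrt Q.
have sT0 : 0 <= sT := sqrtr_ge0 _.
have sQ0 : 0 <= sQ := sqrtr_ge0 _.
have sT2 : sT ^+ 2 = TR by rewrite sqr_sqrtr //; lra.
have sQ2 : sQ ^+ 2 = Q by rewrite sqr_sqrtr //; lra.
have W := @rhs2 R TR P ltac:(lra) P0 ltac:(lra).
rewrite -/sT -/Q -/sQ in W.
set Wm := Num.max _ _ in W.
have [QT|QT] := leP TR Q.
  split.
    apply: le_trans (_ : \sum_(1 <= t < T.+1) (G * D) <= _).
      by apply: ler_sum_nat => t; rewrite ltnS; exact: rle.
    rewrite sumc.
    have : G * D * TR <= G * D * Q by rewrite ler_wpM2l.
    have : 0 <= (C - G * D) * Q by rewrite mulr_ge0 //; [rewrite /C; lra | lra].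
    lra.
  apply: le_trans (_ : \sum_(1 <= t < T.+1) Fp <= _).
    by apply: ler_sum_nat => t; rewrite ltnS; exact: cle.
  rewrite sumc.
  have h1 : TR <= sT * sQ.
    apply: sq_le_inv; first by rewrite mulr_ge0.
    rewrite exprMn sT2 sQ2 expr2; apply: ler_wpM2l => //; lra.
  have h2 : Fp * TR <= Fp * (sT * sQ) by rewrite ler_wpM2l.
  have h3 : 0 <= (C - Fp) * (sT * sQ) by rewrite mulr_ge0 ?mulr_ge0 //; rewrite /C; lra.
  have h4 : C * (sT * sQ) <= C * Wm by rewrite ler_wpM2l //; rewrite /C; lra.
  rewrite -/Wm; lra.
have TR0 : 0 < TR by lra.
set M := Num.max (V + TR - K%:R) (ln TR ^+ 2 / TR).
set a := 2^-1 * Num.sqrt (M / ((D + 1) * TR)).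
have gamE : gamma_par D V T K = 1 - a by [].
have lnsq : 0 < ln TR ^+ 2 / TR by rewrite divr_gt0 // exprn_gt0; lra.
have M0 : 0 < M by rewrite /M lt_max lnsq orbT.
have MP : P <= M by rewrite /M le_max (_ : V + TR - K%:R = P) ?lexx // /P; ring.
have MQ : TR * M <= Q ^+ 2.
  rewrite /M; have [h|h] := leP (V + TR - K%:R) (ln TR ^+ 2 / TR).
    by rewrite mulrC divfK // gt_eqF.
  by rewrite (_ : V + TR - K%:R = P) // /P; ring.
have D10 : 0 < D + 1 by lra.
have a0 : 0 <= a by rewrite mulr_ge0 // sqrtr_ge0.
have a2 : a ^+ 2 = M / (4 * (D + 1) * TR).
  rewrite /a exprMn sqr_sqrtr; last by rewrite divr_ge0 ?mulr_ge0 ?ltW.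
  by field; rewrite !gt_eqF.
have ka : a ^+ 2 * (4 * (D + 1) * TR) = M.
  by rewrite a2 divfK // !gt_eqF // !mulr_gt0.
have Q0 : 0 <= Q by apply: le_trans Q1; exact: ler01.
have sD0 : 0 <= sD := sqrtr_ge0 _.
have [apos a1 aT aP] := @params R TR Q P M D sD a TR0 P0 D0 Q0 QT sD2 sD0 MP M0 Q2TP MQ a0 ka.
set eta := fun t : nat => eta_par l (gamma_par D V T K) t.
set w := fun t : nat => (2 * eta t)^-1.
have a01 : 0 < a < 1 by rewrite apos a1.
have etaF t : (1 <= t)%N ->
    [/\ 0 < eta t, eta t <= (t%:R^-1 + a) / l & w t = l * (1 - (1 - a) ^+ t) / (2 * a)].
  move=> t1; rewrite /w /eta gamE; exact: eta_facts.
have eta0 t : (1 <= t)%N -> 0 < eta t by move=> /etaF[].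
have w0 t : (1 <= t)%N -> 0 <= w t.
  by move=> t1; rewrite /w invr_ge0 mulr_ge0 // ltW // eta0.
have wle t : (1 <= t)%N -> w t <= l / (2 * a).
  move=> t1; have [_ _ ->] := etaF t t1.
  have ia : 0 < (2 * a)^-1 by rewrite invr_gt0 mulr_gt0.
  rewrite ler_pM2r //.
  have : 0 <= (1 - a) ^+ t by rewrite exprn_ge0 //; lra.
  move=> h; rewrite -[X in _ <= X]mulr1; apply: ler_wpM2l; [exact: ltW | lra].
set r := fun t => f t (theta t) - f t (z t).
set c := fun t => pos_part (g t (theta t)).
set b := fun t => pos_part (g t (z t)).
set A := fun t => dot (theta t - z t) (theta t - z t).
set A' := fun t => dot (theta t.+1 - z t) (theta t.+1 - z t).
set X := fun t => c t ^+ 2 / (8 * G ^+ 2 * eta t).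
set hb := fun t => b t ^+ 2 / (2 * G ^+ 2 * eta t).
set tel := fun t => w t * (A t - A' t) - l / 2 * A t.
have step t : (1 <= t < T.+1)%N -> r t + X t <= hb t + tel t + G ^+ 2 * eta t.
  rewrite ltnS => ht.
  have [[_ _ sc sg] [dfG dgG]] := hyp t (theta t) ht (thS' t ht).
  have t1 : (1 <= t)%N by case/andP: ht.
  have := step_ineq l0 G0 (eta0 t t1) cvx (thS' t ht) (zS t ht) sc sg dfG dgG (hproj t ht).
  rewrite /r /X /hb /tel /w /A /A' /c /b.
  rewrite [(_ - _) / (2 * _)]mulrC [eta t * _]mulrC; lra.
have Hs : \sum_(1 <= t < T.+1) r t + \sum_(1 <= t < T.+1) X t <=
    \sum_(1 <= t < T.+1) hb t + \sum_(1 <= t < T.+1) tel t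
    + G ^+ 2 * \sum_(1 <= t < T.+1) eta t.
  rewrite -big_split mulr_sumr -!big_split /=; exact: ler_sum_nat step.
have KP : TR - K%:R <= P by rewrite /P lerDl.
have KP0 : 0 <= TR - K%:R by rewrite subr_ge0.
set B := Fp ^+ 2 * (l / (2 * a)) / G ^+ 2.
have Bhb : \sum_(1 <= t < T.+1) hb t <= l * Fp ^+ 2 * sD / G ^+ 2 * Q.
  have H1 : forall t, (1 <= t <= T)%N -> g t (z t) <= 0 -> hb t = 0.
    by move=> t ht gz; rewrite /hb /b pos_part_le0 // expr0n /= mul0r.
  have H2 : forall t, (1 <= t <= T)%N -> hb t <= B.
    move=> t ht; have t1 : (1 <= t)%N by case/andP: ht.
    have [[_ gF _ _] _] := hyp t (z t) ht (zS t ht).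
    exact: (hb_le (pos_part_ge0 _) (pos_part_le gF) G0 (eta0 t t1) (erefl (w t)) (wle t t1)).
  have := @card_sumR R T K (fun i => g i (z i) <= 0) hb B zK H1 H2.
  move=> h; apply: le_trans h _.
  exact: Bx_le apos G0 l0 KP0 (le_trans KP aP).
have sw t : (1 <= t < T)%N -> A t.+1 - 2 * D * enorm (z t.+1 - z t) <= A' t.
  move=> /andP[t1 tT].
  have htt : (1 <= t.+1 <= T)%N by rewrite tT.
  have ht : (1 <= t <= T)%N by rewrite t1 ltnW.
  have x1 := thS' t.+1 htt.
  have h1 := diam.1 _ _ (zS t ht) x1.
  have h2 := diam.1 _ _ (zS t.+1 htt) x1.
  by rewrite lerBlDr; exact: switch_le h1 h2.
have w1 : w 1%N = l / 2.
  by have [_ _ ->] := etaF 1%N isT; exact: (w_facts 0%N l0 a01).1.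
have wD t : (1 <= t < T)%N -> w t.+1 - w t <= l / 2.
  move=> /andP[t1 _]; have [_ _ ->] := etaF t.+1 isT; have [_ _ ->] := etaF t t1.
  exact: (w_facts t l0 a01).2.
have w0' t : (1 <= t <= T)%N -> 0 <= w t by case/andP => t1 _; exact: w0.
have A0 t : (1 <= t <= T)%N -> 0 <= A t by move=> _; exact: dot_ge0.
have AT : 0 <= A' T := dot_ge0 _.
have Htel := tele (d := fun t => enorm (z t.+1 - z t)) T1 w1 wD w0' A0 sw AT.
have Hd : \sum_(1 <= t < T) 2 * D * (w t * enorm (z t.+1 - z t)) <= D * l / a * V.
  apply: le_trans (_ : \sum_(1 <= t < T) D * l / a * enorm (z t.+1 - z t) <= _).
    apply: ler_sum_nat => t /andP[t1 _].
    exact: tel_term D0 (enorm_ge0 _) apos (wle t t1).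
  rewrite -mulr_sumr; apply: ler_wpM2l.
    by apply: divr_ge0; [apply: mulr_ge0 => //; exact: ltW | exact: ltW].
  by move: zV; rewrite big_add1 /=.
have VP : V <= P by rewrite /P lerDr.
have Btel : \sum_(1 <= t < T.+1) tel t <= 2 * D * l * sD * Q.
  apply: le_trans Htel _; apply: le_trans Hd _.
  exact: Vx_le D0 l0 apos (le_trans VP aP).
have Beta : \sum_(1 <= t < T.+1) eta t <= 3 * Q / l.
  apply: eta_sum l0 T1 _ Q1 QlnT aT => t /andP[t1 _].
  by have [] := etaF t t1.
have SX0 : 0 <= \sum_(1 <= t < T.+1) X t.
  rewrite big_nat_cond; apply: sumr_ge0 => t /andP[/andP[t1 _] _].
  rewrite /X; apply: divr_ge0; first exact: sqr_ge0.
  by apply: mulr_ge0; [apply: mulr_ge0 => //; exact: ltW | exact: ltW (eta0 t t1)].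
have Rlow : - (G * D * TR) <= \sum_(1 <= t < T.+1) r t.
  rewrite -mulNr -sumc; apply: ler_sum_nat => t; rewrite ltnS => ht.
  by rewrite lerNl opprB; exact: rge.
have sT0' : 0 < sT by rewrite sqrtr_gt0; exact: TR0.
have sQ0' : 0 < sQ by rewrite sqrtr_gt0; apply: lt_le_trans Q1; exact: ltr01.
have s0 : 0 < sT / sQ by apply: divr_gt0.
have Hc : \sum_(1 <= t < T.+1) c t <=
    (4 * G ^+ 2 / (sT / sQ)) * \sum_(1 <= t < T.+1) X t
    + (sT / sQ) / 2 * \sum_(1 <= t < T.+1) eta t.
  rewrite !mulr_sumr -big_split /=; apply: ler_sum_nat => t /andP[t1 _].
  exact: amgm G0 s0 (eta0 t t1).
have k10 : 0 <= l * Fp ^+ 2 * sD / G ^+ 2.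
  apply: divr_ge0; last exact: ltW.
  by apply: mulr_ge0; [apply: mulr_ge0; [exact: ltW | exact: sqr_ge0] | exact: sD0].
have k20 : 0 <= 2 * D * l * sD.
  by apply: mulr_ge0 => //; apply: mulr_ge0; [apply: mulr_ge0 => //; exact: ler0n | exact: ltW].
have [F1 F2] := final_comb G0 D0 l0 sT0' sQ0' sT2 sQ2 QT k10 k20 Hs SX0 Bhb Btel Beta Rlow Hc.
split.
  exact: scale_le F1 Q0 CcB.
rewrite -/Wm; apply: scale_le2 F2 _ Cv (ltW C0) W.
by apply: mulr_ge0.
Qed.
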